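(* Let $p$ be a prime and let $B\subset\mathbf{Z}/p\mathbf{Z}$ be a balanced set. Then there exists $g\in -B$ such that $\Sigma(B+g)=\mathbf{Z}/p\mathbf{Z}$.
   Context: A subset $B$ of an abelian group is balanced if for every $b\in B$ there exist distinct $b_1,b_2\in B$ with $2b=b_1+b_2$. For a finite set $S$, $\Sigma(S)=\{\sum_{s\in S'}s: S'\subseteq S\}$ is the set of subset sums. Also $-B=\{-b:b\in B\}$ and $B+g=\{b+g:b\in B\}$. *)

(* Defs.v *)
From mathcomp Require Import all_boot all_algebra.
Set Implicit Arguments. Unset Strict Implicit. Unset Printing Implicit Defensive.
Import GRing.Theory.
Local Open Scope ring_scope.

Definition balanced (G : finZmodType) (B : {set G}) : Prop :=
  forall b, b \in B -> exists b1 b2, [/\ b1 \in B, b2 \in B, b1 != b2 & b *+ 2 = b1 + b2].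

Definition subset_sums (G : finZmodType) (S : {set G}) : {set G} :=
  [set \sum_(s in S') s | S' : {set G} in powerset S].

Definition setN (G : finZmodType) (B : {set G}) : {set G} := [set - b | b in B].
Definition setTr (G : finZmodType) (B : {set G}) (g : G) : {set G} := [set b + g | b in B].

(* Main.v *)
Require Import Defs.
From mathcomp Require Import all_boot all_algebra.
From mathcomp Require Import zify.
Set Implicit Arguments. Unset Strict Implicit.
Import GRing.Theory.
Local Open Scope ring_scope.

Section Chip.
Variable G : finZmodType.
Variables (C : {set G}) (b0 : G).

Definition Fs (S : {set G}) : {set G} :=
  b0 |: [set x in C | [exists x1 in C, exists x2 in C,
                        [&& x1 \in S, x1 != x2 & x *+ 2 == x1 + x2]]].

Lemma Fs_mono : {homo Fs : X Y / X \subset Y}.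
Proof.
move=> X Y sXY; apply/subsetP=> x; rewrite !inE.
case/orP=> [->//|/andP[xC /existsP[x1 /andP[x1C /existsP[x2 /andP[x2C /and3P[h1 h2 h3]]]]]]].
apply/orP; right; rewrite xC /=; apply/existsP; exists x1; rewrite x1C /=.
apply/existsP; exists x2; rewrite x2C /= h2 h3 andbT.
by rewrite andbT (subsetP sXY _ h1).
Qed.

Definition wt (y : G) : nat := (2 ^ #|G| - 2 ^ (#|G| - fix_order Fs y))%N.
Definition mu (c : G -> nat) : nat := (\sum_y c y * wt y)%N.
Definition cval (c : G -> nat) : G := \sum_y (y - b0) *+ c y.

Lemma sum_ind (f : G -> G) a : \sum_y f y *+ (y == a) = f a.
Proof. by rewrite (bigD1 a) //= eqxx big1 ?addr0 // => y /negPf ->. Qed.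

Lemma sumn_ind (f : G -> nat) a : (\sum_y (y == a) * f y = f a)%N.
Proof. by rewrite (bigD1 a) //= eqxx big1 ?addn0 ?mul1n // => y /negPf ->. Qed.

Lemma chip (hC : C \subset fixset Fs) (hb0 : b0 \in C) (c : G -> nat) :
  (forall y, c y != 0%N -> y \in C) ->
  exists2 X : {set G}, X \subset C & \sum_(x in X) (x - b0) = cval c.
Proof.
move: {2}(mu c).+1 (ltnSn (mu c)) => m; elim: m c => [//|m IH] c hm hsupp.
case: (boolP [exists y, (y != b0) && (1 < c y)%N]) => [/existsP[x /andP[xb0 cx]]|].
  have xC : x \in C by apply: hsupp; rewrite -lt0n ltnW.
  have xF : x \in fixset Fs by apply: (subsetP hC).
  have := xF; rewrite -in_iter_fix_orderE.
  have := fix_order_gt0 Fs x; rewrite xF.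
  case E: (fix_order Fs x) => [//|k] _ /=.
  rewrite /Fs !inE (negPf xb0) /= => /andP[_ /existsP[x1 /andP[x1C /existsP[x2 /andP[x2C /and3P[x1k x12 hx]]]]]].
  have fo1 : (fix_order Fs x1 <= k)%N by apply: (fix_order_small Fs_mono).
  have fo2 := fix_order_le_max Fs x2.
  have fo := fix_order_le_max Fs x; rewrite E in fo.
  pose c0 y := (c y - 2 * (y == x))%N.
  have cE y : c y = (c0 y + 2 * (y == x))%N.
    by rewrite /c0; case: eqP => [->|_]; rewrite ?muln0 ?subn0 ?addn0 // muln1 subnK.
  pose c' y := (c0 y + (y == x1) + (y == x2))%N.
  have hm' : (mu c' < m)%N.
    rewrite -ltnS; apply: leq_trans hm; rewrite ltnS.
    rewrite /mu.
    under eq_bigr do rewrite /c' !mulnDl.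
    rewrite !big_split /= !sumn_ind.
    under [X in (_ < X)%N]eq_bigr do rewrite cE mulnDl -mulnA.
    rewrite big_split /= -big_distrr /= sumn_ind -!addnA ltn_add2l.
    rewrite /wt E.
    have h1 : (2 ^ (#|G| - k.+1) * 2 <= 2 ^ (#|G| - fix_order Fs x1))%N.
      rewrite -expnSr leq_pexp2l //; move: fo fo1; set N := #|G|; lia.
    have h2 : (0 < 2 ^ (#|G| - fix_order Fs x2))%N by rewrite expn_gt0.
    have h3 : (2 ^ (#|G| - fix_order Fs x1) <= 2 ^ #|G|)%N by rewrite leq_pexp2l // leq_subr.
    have h4 : (2 ^ (#|G| - fix_order Fs x2) <= 2 ^ #|G|)%N by rewrite leq_pexp2l // leq_subr.
    have h5 : (2 ^ (#|G| - k.+1) <= 2 ^ #|G|)%N by rewrite leq_pexp2l // leq_subr.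
    lia.
  have hs' : forall y, c' y != 0%N -> y \in C.
    move=> y; rewrite /c' /c0.
    case: (y =P x1) => [->//|_]; case: (y =P x2) => [->//|_].
    rewrite !addn0 => h; apply: hsupp; move: h; apply: contraNN => /eqP->; by rewrite sub0n.
  have [X XC HX] := IH c' hm' hs'.
  exists X => //; rewrite HX /cval.
    under eq_bigr do rewrite /c' !mulrnDr.
    rewrite !big_split /= !sum_ind.
    under [RHS]eq_bigr do rewrite cE mulrnDr mulrnA.
    rewrite big_split /= sum_ind.
    rewrite -addrA; congr (_ + _).
    rewrite mulrnBl (eqP hx) addrACA; congr (_ + _).
    by rewrite -opprD.
move/existsPn=> hst.
exists [set y | (y != b0) && (c y == 1%N)].
  apply/subsetP=> y; rewrite inE => /andP[_ /eqP h]; apply: hsupp; by rewrite h.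
rewrite /cval big_mkcond /=; apply: eq_bigr => y _; rewrite inE.
case: (y =P b0) => [->|/eqP yb0] /=; first by rewrite subrr mul0rn.
have := hst y; rewrite yb0 /= -leqNgt.
by case: (c y) => [|[|]] //= _; rewrite ?mulr0n.
Qed.

End Chip.
Lemma key (G : finZmodType) (n : nat) (C : {set G}) :
  (#|C| <= n)%N -> C != set0 -> balanced C ->
  exists b0, exists a, [/\ b0 \in C, a \in C, a != b0 &
    forall k, exists2 X : {set G}, X \subset C & \sum_(x in X) (x - b0) = (a - b0) *+ k].
Proof.
elim: n C => [|n IH] C hn hne hbal.
  by move: hne; rewrite -card_gt0; lia.
have [b0 b0C] := set0Pn _ hne.
case: (boolP (C \subset fixset (Fs C b0))) => hsub.
  have [b1 [b2 [b1C b2C b12 _]]] := hbal b0 b0C.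
  pose a := if b1 == b0 then b2 else b1.
  have aC : a \in C by rewrite /a; case: ifP.
  have ab0 : a != b0.
    rewrite /a; case: (b1 =P b0) => [e|/eqP //]; by rewrite -e eq_sym.
  exists b0, a; split => // k.
  pose c y := ((y == a) * k)%N.
  have hs : forall y, c y != 0%N -> y \in C.
    by move=> y; rewrite /c; case: (y =P a) => [->//|]; rewrite mul0n eqxx.
  have [X XC HX] := chip hsub b0C hs.
  exists X => //; rewrite HX /cval /c.
  under eq_bigr do rewrite mulrnA.
  by rewrite sumrMnl sum_ind.
pose Q := C :\: fixset (Fs C b0).
have b0F : b0 \in fixset (Fs C b0).
  by rewrite -(fixsetK (Fs_mono C b0)) /Fs setU11.
have QC : Q \subset C by apply: subsetDl.
have hQn : (#|Q| <= n)%N.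
  rewrite -ltnS; apply: leq_trans hn; apply: proper_card.
  apply/properP; split => //; exists b0 => //; by rewrite inE b0F.
have hQne : Q != set0.
  apply/set0Pn; have [x xC xF] := subsetPn hsub; exists x; by rewrite inE xF.
have hQbal : balanced Q.
  move=> x; rewrite inE => /andP[xF xC].
  have [b1 [b2 [b1C b2C b12 hx]]] := hbal x xC.
  have inF y1 y2 : y1 \in C -> y2 \in C -> y1 != y2 -> x *+ 2 = y1 + y2 ->
       y1 \notin fixset (Fs C b0).
    move=> y1C y2C y12 hy; apply: contra xF => y1F.
    rewrite -(fixsetK (Fs_mono C b0)) /Fs !inE xC /=; apply/orP; right.
    apply/existsP; exists y1; rewrite y1C /=; apply/existsP; exists y2.
    by rewrite y2C y1F y12 hy eqxx.
  exists b1, b2; split => //; rewrite inE ?b1C ?b2C andbT.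
    exact: (inF b1 b2).
  by apply: (inF b2 b1) => //; [rewrite eq_sym|rewrite addrC].
have [b0' [a' [b0Q aQ ab0 H]]] := IH Q hQn hQne hQbal.
exists b0', a'; split => //; try exact: (subsetP QC).
move=> k; have [X XQ HX] := H k; exists X => //; exact: subset_trans QC.
Qed.

Lemma Zp_mult (p : nat) (hp : prime p) (u v : 'Z_p) : u != 0 -> exists k, v = u *+ k.
Proof.
move=> u0; have p1 := prime_gt1 hp.
have uU : u \is a GRing.unit.
  rewrite -(natr_Zp u) unitZpE // prime_coprime //.
  have : (val u < p)%N by rewrite -[X in (_ < X)%N](Zp_cast p1) ltn_ord.
  have : (0 < val u)%N by rewrite lt0n; apply: contra u0 => /eqP h; apply/eqP/val_inj.
  move=> h1 h2; apply/negP => /(dvdn_leq h1); lia.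
exists (val (u^-1 * v)); by rewrite -mulr_natr natr_Zp mulrA mulrV // mul1r.
Qed.

Unset Implicit Arguments.

Theorem proposition4p3 (p : nat) (hp : prime p) (B : {set 'Z_p}) :
  B != set0 -> balanced B ->
  exists2 g, g \in setN B & subset_sums (setTr B g) = [set: 'Z_p].
Proof.
move=> hne hbal.
have [b0 [a [b0B aB ab0 H]]] := @key _ _ B (leqnn _) hne hbal.
exists (- b0); first by apply/imsetP; exists b0.
apply/eqP; rewrite eqEsubset subsetT /=; apply/subsetP => v _.
have [k hk] : exists k, v = (a - b0) *+ k by apply: Zp_mult => //; rewrite subr_eq0.
have [X XB HX] := H k.
rewrite /subset_sums /setTr; apply/imsetP; exists [set x + - b0 | x in X].
  by rewrite powersetE; apply: imsetS.
rewrite big_imset /=; last by move=> x y _ _ /addIr.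
by rewrite hk -HX.
Qed.
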